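(* Let $G$ be a directed graph without self-loops on vertex set $V=\{0,1,\dots,n-1\}$, $n\ge2$, with integer edge weights in $[-M,M]$, $M\ge1$. Let $H=100M$ and $L=\lceil\log_2 n\rceil$. Let $G'$ be the directed graph with vertices $u_A,u_B,u_C,u_D$ for each $u\in V$, a vertex $x$, and vertices $z_1,\dots,z_L,o_1,\dots,o_L$, and edges: for every edge $(u,v)$ of $G$, edges $(u_A,v_B),(u_B,v_C),(u_C,v_D)$ of weight $2H+w(u,v)$; for every $u\in V$, edges $(u_A,x)$ and $(x,u_D)$ of weight $3H$; for every $u\in V$ and $i\in\{1,\dots,L\}$, if the $i$-th bit of the binary representation of $u$ is $0$ then edges $(u_A,z_i)$ of weight $2H$ and $(o_i,u_D)$ of weight $3H$, and otherwise edges $(u_A,o_i)$ of weight $2H$ and $(z_i,u_D)$ of weight $3H$. Then the number of ordered pairs $(s,t)$ of distinct vertices of $G'$ other than $x$ such that some shortest $s$-to-$t$ path in $G'$ passes through $x$ equals $n$ minus the number of vertices of $G$ that lie on a negative-weight triangle.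
   Context: A negative-weight triangle in a directed graph is a triple of distinct vertices $u,v,t$ with edges $(u,v),(v,t),(t,u)$ whose weights sum to a negative number. *)

(* Defs.v *)
From HB Require Import structures.
From mathcomp Require Import all_boot all_order all_algebra.
Set Implicit Arguments. Unset Strict Implicit. Unset Printing Implicit Defensive.
Import Order.TTheory GRing.Theory Num.Theory.
Local Open Scope ring_scope.

(* Vertices of G' (n = #V(G), L = number of bit gadgets):
   inl (u, k)          = u_A, u_B, u_C, u_D for k = 0, 1, 2, 3
   inr (inl tt)        = x
   inr (inr (i, false)) = z_{i+1},  inr (inr (i, true)) = o_{i+1}  (i : 'I_L) *)
Definition GV (n L : nat) : finType := ('I_n * 'I_4 + (unit + 'I_L * bool))%type.

Definition vx (n L : nat) : GV n L := inr (inl tt).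

(* the (i+1)-th bit (least significant first) of u, as a boolean *)
Definition bitn (u i : nat) : bool := odd (u %/ 2 ^ i).

Definition gw (n L : nat) (E : rel 'I_n) (w : 'I_n -> 'I_n -> int) (H : int)
  (a b : GV n L) : option int :=
  match a, b with
  | inl (u, i), inl (v, j) =>
      if E u v && [|| (val i == 0%N) && (val j == 1%N),
                      (val i == 1%N) && (val j == 2%N)
                    | (val i == 2%N) && (val j == 3%N)]
      then Some (2 * H + w u v) else None
  | inl (u, i), inr (inl _) => if val i == 0%N then Some (3 * H) else None
  | inr (inl _), inl (v, j) => if val j == 3%N then Some (3 * H) else None
  | inl (u, i), inr (inr (k, b)) =>
      if (val i == 0%N) && (bitn u k == b) then Some (2 * H) else None
  | inr (inr (k, b)), inl (v, j) =>
      (* bit 0 -> edge from o_k (b = true); bit 1 -> edge from z_k (b = false) *)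
      if (val j == 3%N) && (bitn v k != b) then Some (3 * H) else None
  | _, _ => None
  end.

Fixpoint walk_weight (V : Type) (g : V -> V -> option int) (s : V) (p : seq V)
  : option int :=
  match p with
  | [::] => Some 0
  | t :: p' =>
      match g s t, walk_weight g t p' with
      | Some a, Some b => Some (a + b)
      | _, _ => None
      end
  end.

Definition shortest_through (V : eqType) (g : V -> V -> option int) (s t y : V) :=
  exists p c, [/\ walk_weight g s p = Some c, last s p = t, y \in s :: p &
     forall q c', walk_weight g s q = Some c' -> last s q = t -> c <= c'].

Definition on_neg_triangle (n : nat) (E : rel 'I_n) (w : 'I_n -> 'I_n -> int)
  (u : 'I_n) : bool :=
  [exists v, exists t, [&& u != v, v != t, t != u, E u v, E v t, E t u &
                          w u v + w v t + w t u < 0]].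

(* Main.v *)
Require Import Defs.
From HB Require Import structures.
From mathcomp Require Import all_boot all_order all_algebra.
From mathcomp Require Import zify ring lra.
Import Order.TTheory GRing.Theory Num.Theory.
Local Open Scope ring_scope.
Set Implicit Arguments. Unset Strict Implicit.

Lemma bits_eq k : forall a b : nat, (a < 2 ^ k)%N -> (b < 2 ^ k)%N ->
  (forall i, (i < k)%N -> bitn a i = bitn b i) -> a = b.
Proof.
elim: k => [|k IH] a b.
  by rewrite expn0 !ltnS !leqn0 => /eqP -> /eqP ->.
move=> Ha Hb Hbits.
have Hh : a./2 = b./2.
  apply: IH.
  - by rewrite -divn2 ltn_divLR // -expnSr.
  - by rewrite -divn2 ltn_divLR // -expnSr.
  move=> i Hi; have := Hbits i.+1 Hi; rewrite /bitn expnS !divnMA !divn2.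
  done.
have Ho : odd a = odd b by have := Hbits 0%N isT; rewrite /bitn expn0 !divn1.
by rewrite -(odd_double_half a) -(odd_double_half b) Ho Hh.
Qed.

Lemma bits_diff n (u v : 'I_n) : u != v ->
  exists i : 'I_(up_log 2 n), bitn u i != bitn v i.
Proof.
move=> Huv; apply/existsP; apply: contraR Huv; rewrite negb_exists => /forallP Hall.
apply/eqP/val_inj/bits_eq.
- exact: leq_trans (ltn_ord u) (up_logP _ _).
- exact: leq_trans (ltn_ord v) (up_logP _ _).
move=> i Hi; have := Hall (Ordinal Hi); by move/negbNE/eqP.
Qed.
Section G.
Variables (n L : nat) (E : rel 'I_n) (w : 'I_n -> 'I_n -> int) (H : int).
Local Notation g := (gw (L:=L) E w H).
Local Notation x := (vx n L).

Definition lvl (a : GV n L) : nat :=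
  match a with inl (_, k) => (2 * k)%N | inr _ => 1%N end.

Lemma walk_cons s t p c : walk_weight g s (t :: p) = Some c ->
  exists a b, [/\ g s t = Some a, walk_weight g t p = Some b & c = a + b].
Proof.
rewrite /=; case: (g s t) => [a|]; case: (walk_weight g t p) => [b|] //.
by case=> <-; exists a, b.
Qed.

Lemma lvl_le6 a : (lvl a <= 6)%N.
Proof. case: a => [[u k]|] //=; have := ltn_ord k; lia. Qed.

Lemma edge_lvl a b c : g a b = Some c -> (lvl a < lvl b)%N.
Proof.
case: a => [[u i]|[[]|[k b0]]]; case: b => [[v j]|[[]|[k' b1]]] //=;
  try (case: ifP => // /andP[/eqP Hi _] _; rewrite Hi //); try (case: ifP => // /eqP Hi _; rewrite Hi //).
case: ifP => // /andP[_ /or3P [] /andP[/eqP Hi /eqP Hj]] _; rewrite Hi Hj //.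
Qed.

Lemma walk_lvl p s c : walk_weight g s p = Some c ->
  forall y, y \in p -> (lvl s < lvl y)%N.
Proof.
elim: p s c => [//|a p IH] s c /walk_cons [ca [cp [Ha Hp _]]] y.
have Hsa := edge_lvl Ha.
rewrite inE => /orP [/eqP -> //|Hy]; exact: ltn_trans Hsa (IH _ _ Hp y Hy).
Qed.

Lemma walk_end v (j : 'I_4) q c : walk_weight g (inl (v, j)) q = Some c ->
  val j = 3%N -> q = [::] /\ c = 0.
Proof.
case: q => [|e q]; first by case.
move=> /walk_cons [ce [cq [Hg _ _]]] Hj; exfalso.
have := edge_lvl Hg; have := lvl_le6 e; rewrite /= Hj; lia.
Qed.

Lemma gw_AA u (i : 'I_4) v (j : 'I_4) c : g (inl (u, i)) (inl (v, j)) = Some c ->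
  [/\ E u v, val j = (val i).+1 & c = 2 * H + w u v].
Proof.
rewrite /=; case: ifP => // /andP[Huv /or3P [] /andP[/eqP Hi /eqP Hj]] [<-];
  by rewrite Hi Hj.
Qed.

Lemma gw_Ax u (i : 'I_4) c : g (inl (u, i)) x = Some c -> val i = 0%N /\ c = 3 * H.
Proof. by rewrite /=; case: ifP => // /eqP -> [<-]. Qed.

Lemma gw_Ag u (i : 'I_4) k b c : g (inl (u, i)) (inr (inr (k, b))) = Some c ->
  [/\ val i = 0%N, bitn u k = b & c = 2 * H].
Proof. by rewrite /=; case: ifP => // /andP[/eqP -> /eqP ->] [<-]. Qed.

Lemma gw_xb b c : g x b = Some c -> exists v, b = inl (v, ord_max) /\ c = 3 * H.
Proof.
case: b => [[v j]|[[]|[k b1]]] //=; case: ifP => // /eqP Hj [<-].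
by exists v; split => //; congr (inl (_, _)); apply: val_inj.
Qed.

Lemma gw_gb k b d c : g (inr (inr (k, b))) d = Some c ->
  exists v, [/\ d = inl (v, ord_max), bitn v k != b & c = 3 * H].
Proof.
case: d => [[v j]|[[]|[k' b1]]] //=; case: ifP => // /andP[/eqP Hj Hb] [<-].
by exists v; split => //; congr (inl (_, _)); apply: val_inj.
Qed.

Lemma x_structure s p c : walk_weight g s p = Some c -> x \in s :: p -> s != x ->
  last s p != x ->
  exists u v, [/\ s = inl (u, ord0), p = [:: x; inl (v, ord_max)] & c = 3 * H + (3 * H + 0)].
Proof.
case: p => [|a p]; first by move=> _; rewrite inE => /eqP ->; rewrite eqxx.
move=> /walk_cons [ca [cp [Ha Hp ->]]] /=.
rewrite !inE => /or3P [/eqP -> | /eqP ax | xp]; first by rewrite eqxx.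
- subst a => _.
  have [u [Hs Hca]] : exists u, s = inl (u, ord0) /\ ca = 3 * H.
    case: s Ha => [[u i]|[[]|[k b]]] //=.
    case: ifP => // /eqP Hi [<-]; exists u; split => //.
    by congr (inl (_, _)); apply: val_inj.
  case: p Hp => [|b p]; first by move=> _ /=; rewrite ?eqxx.
  move=> /walk_cons [cb [cp' [Hb Hp ->]]] _.
  have [v [Hbv Hcb]] := gw_xb Hb; subst b.
  have [-> ->] := walk_end Hp erefl.
  by exists u, v; rewrite Hs Hca Hcb.
- exfalso; have := walk_lvl Hp xp; have := edge_lvl Ha; rewrite /=; lia.
Qed.

Lemma inl_inj u v (i j : 'I_4) : (inl (u, i) : GV n L) = inl (v, j) -> u = v /\ val i = val j.
Proof. by case=> -> ->. Qed.

Lemma back u : irreflexive E -> ~~ on_neg_triangle E w u ->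
  shortest_through g (inl (u, ord0)) (inl (u, ord_max)) x.
Proof.
move=> Hloop Hu; exists [:: x; inl (u, ord_max)], (3 * H + (3 * H + 0)); split => //.
move=> q c'; case: q => [|a q].
  by move=> _ /= /inl_inj [_].
move=> /walk_cons [ca [cq [Ha Hq ->]]].
case: a Ha Hq => [[a k]|[[]|[k b]]] Ha Hq.
- have [Hua Hk ->] := gw_AA Ha.
  case: q Hq => [|b q]; first by move=> _ /= /inl_inj [_]; rewrite Hk.
  move=> /walk_cons [cb [cq' [Hb Hq ->]]].
  case: b Hb Hq => [[b j]|[[]|[k' b']]] Hb Hq; last 2 first.
  + by have [] := gw_Ax Hb; rewrite Hk.
  + by have [] := gw_Ag Hb; rewrite Hk.
  have [Hab Hj ->] := gw_AA Hb.
  case: q Hq => [|d q]; first by move=> _ /= /inl_inj [_]; rewrite Hj Hk.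
  move=> /walk_cons [cd [cr [Hd Hr ->]]].
  case: d Hd Hr => [[d l]|[[]|[k' b']]] Hd Hr; last 2 first.
  + by have [] := gw_Ax Hd; rewrite Hj Hk.
  + by have [] := gw_Ag Hd; rewrite Hj Hk.
  have [Hbd Hl ->] := gw_AA Hd.
  have Hl3 : val l = 3%N by rewrite Hl Hj Hk.
  have [-> ->] := walk_end Hr Hl3.
  move=> /= /inl_inj [Hdu _]; subst d.
  have Hua' : u != a by apply: contraTneq Hua => ->; rewrite Hloop.
  have Hab' : a != b by apply: contraTneq Hab => ->; rewrite Hloop.
  have Hbu' : b != u by apply: contraTneq Hbd => ->; rewrite Hloop.
  have : ~~ (w u a + w a b + w b u < 0).
    apply: contra Hu => Hneg; apply/existsP; exists a; apply/existsP; exists b.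
    by rewrite Hua' Hab' Hbu' Hua Hab Hbd Hneg.
  rewrite -leNgt => Hnn; lra.
- have [_ ->] := gw_Ax Ha.
  case: q Hq => [|b q]; first by move=> _ /= [].
  move=> /walk_cons [cb [cq' [Hb Hq ->]]].
  have [v [Hv ->]] := gw_xb Hb; subst b.
  have [-> ->] := walk_end Hq erefl.
  move=> _; lra.
- have [_ Hb _] := gw_Ag Ha.
  case: q Hq => [|d q]; first by move=> _ /= [].
  move=> /walk_cons [cd [cr [Hd Hr ->]]].
  have [v [Hv Hvb _]] := gw_gb Hd; subst d.
  have [-> _] := walk_end Hr erefl.
  move=> /= /inl_inj [Hvu _]; subst v.
  by rewrite Hb eqxx in Hvb.
Qed.

End G.

Lemma fwd n E w (H : int) s t : 0 < H -> s != vx n (up_log 2 n) -> t != vx n (up_log 2 n) ->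
  shortest_through (gw E w H) s t (vx n (up_log 2 n)) ->
  exists u, [/\ s = inl (u, ord0), t = inl (u, ord_max) & ~~ on_neg_triangle E w u].
Proof.
move=> HH Hs Ht [p [c [Hw Hl Hx Hmin]]].
have Hl' : last s p != vx n (up_log 2 n) by rewrite Hl.
have [u [v [Hsu Hp Hc]]] := x_structure Hw Hx Hs Hl'.
subst s p c; move: Hl => /= Htt; subst t.
have Huv : u = v.
  apply/eqP; apply/negPn/negP => Huv.
  have [i Hi] := bits_diff Huv.
  have Hi' : bitn v i != bitn u i by rewrite eq_sym.
  have Hw' : walk_weight (gw (L:=up_log 2 n) E w H) (inl (u, ord0))
     [:: inr (inr (i, bitn u i)); inl (v, ord_max)] = Some (2 * H + (3 * H + 0)).
    by rewrite /= eqxx Hi'.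
  move: (Hmin _ _ Hw' erefl); lra.
subst v; exists u; split => //.
apply/negP => /existsP [a /existsP [b /and5P [H1 H2 H3 H4 /and3P [H5 H6 H7]]]].
pose k1 : 'I_4 := @Ordinal 4 1 isT.
pose k2 : 'I_4 := @Ordinal 4 2 isT.
have Hw' : walk_weight (gw (L:=up_log 2 n) E w H) (inl (u, ord0))
     [:: inl (a, k1); inl (b, k2); inl (u, ord_max)] =
     Some ((2 * H + w u a) + ((2 * H + w a b) + ((2 * H + w b u) + 0))).
  by rewrite /= H4 H5 H6.
move: (Hmin _ _ Hw' erefl); lra.
Qed.


Unset Implicit Arguments.

Theorem mainTheorem10 (n : nat) (E : rel 'I_n) (w : 'I_n -> 'I_n -> int) (M : int)
  (Hn : (2 <= n)%N) (HM : 1 <= M) (Hloop : irreflexive E)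
  (Hw : forall u v, E u v -> - M <= w u v <= M) :
  exists S : {set GV n (up_log 2 n) * GV n (up_log 2 n)},
    (forall s t, (s, t) \in S <->
       [/\ s != t, s != vx n (up_log 2 n), t != vx n (up_log 2 n) &
           shortest_through (gw E w (100 * M)) s t (vx n (up_log 2 n))]) /\
    #|S| = (n - #|[set u | on_neg_triangle E w u]|)%N.
Proof.
have HH : 0 < 100 * M by lra.
pose f := fun u : 'I_n => ((inl (u, ord0), inl (u, ord_max)) : GV n (up_log 2 n) * GV n (up_log 2 n)).
exists (f @: (~: [set u | on_neg_triangle E w u])); split.
- move=> s t; split.
  + case/imsetP => u; rewrite !inE => Hu [-> ->]; split => //.
    * by apply/negP => /eqP /inl_inj [_].
    * exact: back.
  + case => Hst Hsx Htx Hsh.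
    have [u [-> -> Hu]] := fwd HH Hsx Htx Hsh.
    by apply/imsetP; exists u; rewrite // !inE.
- rewrite card_imset; last by move=> u v [].
  by rewrite cardsCs setCK card_ord.
Qed.
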